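(* Let $R$ be a discrete valuation ring with uniformizer $\pi$ and fraction field $F$. Let $n=n_1+\cdots+n_m$ and consider the subgroups $L=\mathrm{GL}_{n_1}\times\cdots\times\mathrm{GL}_{n_m}$ (block diagonal) $\subset P$ (block lower triangular with diagonal blocks $\mathrm{GL}_{n_1},\dots,\mathrm{GL}_{n_m}$) $\subset\mathrm{GL}_n$. Let $g\in P(F)$ and let $g_L\in L(F)$ be its block-diagonal part (its image in the Levi quotient). Put $N_l=n_1+\cdots+n_l$ for $0\le l\le m$. Let $k_1\ge\cdots\ge k_n$ be integers and assume that for every $0\le l\le m-1$ the matrix $(g_{ij})_{N_l+1\le i,j\le n}\in\mathrm{GL}_{n-N_l}(F)$ has type $(k_{N_l+1},\dots,k_n)$. Then $g_L^{-1}g\in P(R)$.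
   Context: For integers $k_1\ge\cdots\ge k_r$, an element $h\in\mathrm{GL}_r(F)$ has type $(k_1,\dots,k_r)$ if $h\in\mathrm{GL}_r(R)\,\mathrm{diag}(\pi^{k_1},\dots,\pi^{k_r})\,\mathrm{GL}_r(R)$. *)

(* Defs.v *)
From HB Require Import structures.
From mathcomp Require Import all_boot all_order all_algebra.
Set Implicit Arguments. Unset Strict Implicit. Unset Printing Implicit Defensive.
Import Order.TTheory GRing.Theory Num.Theory.
Local Open Scope ring_scope.

(* A discrete valuation ring R with uniformizer pi and fraction field F is
   encoded as a predicate R on a field F such that: R is a subring of F,
   pi \in R, pi^-1 \notin R (pi is not a unit of R), and every nonzero x of F
   is u * pi^k with u a unit of R and k an integer. *)
Definition is_DVR (F : fieldType) (R : {pred F}) (pi : F) : Prop :=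
  [/\ 1 \in R /\ (forall x y, x \in R -> y \in R -> x - y \in R),
      (forall x y, x \in R -> y \in R -> x * y \in R),
      pi \in R, pi^-1 \notin R &
      (forall x : F, x != 0 -> exists u : F, exists k : int,
          [/\ u \in R, u^-1 \in R & x = u * pi ^ k])].

Definition GL_over (F : fieldType) (R : {pred F}) r (A : 'M[F]_r) : Prop :=
  [/\ A \in unitmx, (forall i j, A i j \in R) & (forall i j, invmx A i j \in R)].

Definition has_type (F : fieldType) (R : {pred F}) (pi : F) r
    (A : 'M[F]_r) (k : 'I_r -> int) : Prop :=
  exists U V : 'M[F]_r, [/\ GL_over R U, GL_over R V &
     A = U *m diag_mx (\row_i (pi ^ (k i))) *m V].

Definition Npart (ns : seq nat) (l : nat) : nat := sumn (take l ns).

Definition block_lower (F : fieldType) (ns : seq nat) (g : 'M[F]_(sumn ns)) : Prop :=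
  forall (l : nat) (i j : 'I_(sumn ns)),
    (l <= size ns)%N -> (i < Npart ns l <= j)%N -> g i j = 0.

Definition sep_blocks (ns : seq nat) (i j : nat) : bool :=
  has (fun l => ((i < Npart ns l <= j) || (j < Npart ns l <= i))%N)
      (iota 0 (size ns).+1).

Definition levi_part (F : fieldType) (ns : seq nat) (g : 'M[F]_(sumn ns)) :
  'M[F]_(sumn ns) :=
  \matrix_(i, j) (if sep_blocks ns i j then 0 else g i j).

Lemma shift_ord_proof n a (i : 'I_(n - a)) : (a + i < n)%N.
Proof. by rewrite -ltn_subRL. Qed.

Definition shift_ord n a (i : 'I_(n - a)) : 'I_n :=
  Ordinal (shift_ord_proof i).

(* lower-right submatrix (g_ij)_{a+1 <= i,j <= n} (1-based) *)
Definition lr_sub (F : fieldType) n (a : nat) (g : 'M[F]_n) : 'M[F]_(n - a) :=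
  \matrix_(i, j) g (shift_ord i) (shift_ord j).

Arguments block_lower {F} ns g.
Arguments levi_part {F} ns g.
Arguments sep_blocks ns i j.
Arguments lr_sub {F n} a g.
Arguments shift_ord {n} a i.
Arguments has_type {F} R pi {r} A k.
Arguments GL_over {F} R {r} A.
Arguments is_DVR {F} R pi.

(* Main.v *)
Require Import Defs.
From mathcomp Require Import all_boot all_order all_algebra all_fingroup.
Set Implicit Arguments. Unset Strict Implicit. Unset Printing Implicit Defensive.
Import Order.TTheory GRing.Theory Num.Theory.
Local Open Scope ring_scope.

Lemma R1 (F : fieldType) (R : {pred F}) pi : is_DVR R pi -> 1 \in R.
Proof. by case=> [[]]. Qed.
Lemma Rsub (F : fieldType) (R : {pred F}) pi : is_DVR R pi ->
  forall x y, x \in R -> y \in R -> x - y \in R.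
Proof. by case=> [[]]. Qed.
Lemma Rmul (F : fieldType) (R : {pred F}) pi : is_DVR R pi ->
  forall x y, x \in R -> y \in R -> x * y \in R.
Proof. by case. Qed.
Lemma R0 (F : fieldType) (R : {pred F}) pi : is_DVR R pi -> 0 \in R.
Proof. by move=> HR; rewrite -(subrr 1); apply: (Rsub HR); apply: (R1 HR). Qed.
Lemma Ropp (F : fieldType) (R : {pred F}) pi : is_DVR R pi ->
  forall x, x \in R -> - x \in R.
Proof. by move=> HR x Hx; rewrite -sub0r; apply: (Rsub HR) => //; apply: (R0 HR). Qed.
Lemma Radd (F : fieldType) (R : {pred F}) pi : is_DVR R pi ->
  forall x y, x \in R -> y \in R -> x + y \in R.
Proof. by move=> HR x y Hx Hy; rewrite -[y]opprK; apply: (Rsub HR) => //; apply: (Ropp HR). Qed.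
Lemma Rsum (F : fieldType) (R : {pred F}) pi (I : Type) (r : seq I) (P : pred I) (f : I -> F) :
  is_DVR R pi -> (forall i, P i -> f i \in R) -> \sum_(i <- r | P i) f i \in R.
Proof. move=> HR H; apply: (big_ind (fun x => x \in R)) => //; [exact: (R0 HR)|exact: (Radd HR)]. Qed.
Lemma Rprod (F : fieldType) (R : {pred F}) pi (I : Type) (r : seq I) (P : pred I) (f : I -> F) :
  is_DVR R pi -> (forall i, P i -> f i \in R) -> \prod_(i <- r | P i) f i \in R.
Proof. move=> HR H; apply: (big_ind (fun x => x \in R)) => //; [exact: (R1 HR)|exact: (Rmul HR)]. Qed.
Lemma Rsign (F : fieldType) (R : {pred F}) pi (b : bool) : is_DVR R pi -> (-1) ^+ b \in R.
Proof. by move=> HR; case: b; rewrite ?expr1 ?expr0; [apply: (Ropp HR)|]; apply: (R1 HR). Qed.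
Lemma Rdet (F : fieldType) (R : {pred F}) pi n (A : 'M[F]_n) : is_DVR R pi ->
  (forall i j, A i j \in R) -> \det A \in R.
Proof.
move=> HR H; apply: (Rsum _ HR) => s _; apply: (Rmul HR); first exact: Rsign HR.
by apply: (Rprod _ HR).
Qed.
Lemma pi_neq0 (F : fieldType) (R : {pred F}) pi : is_DVR R pi -> pi != 0.
Proof. move=> HR; apply/eqP=> p0; case: (HR) => _ _ _ /negP[]; rewrite p0 invr0; exact: (R0 HR). Qed.
Lemma Rpiz (F : fieldType) (R : {pred F}) pi (z : int) : is_DVR R pi -> 0 <= z -> pi ^ z \in R.
Proof.
move=> HR; case: z => // n _; rewrite -exprnP; elim: n => [|n IH]; first by rewrite expr0 (R1 HR).
by rewrite exprS; apply: (Rmul HR) => //; case: HR.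
Qed.
Lemma Rmx_mul (F : fieldType) (R : {pred F}) pi m n p (A : 'M[F]_(m,n)) (B : 'M[F]_(n,p)) :
  is_DVR R pi -> (forall i j, A i j \in R) -> (forall i j, B i j \in R) ->
  forall i j, (A *m B) i j \in R.
Proof. move=> HR HA HB i j; rewrite mxE; apply: (Rsum _ HR) => l _; exact: (Rmul HR). Qed.
Lemma det_mul_rect (K : comNzRingType) r n (A : 'M[K]_(r,n)) (B : 'M[K]_(n,r)) :
  \det (A *m B) = \sum_(f : {ffun 'I_r -> 'I_n})
      (\prod_i A i (f i)) * \det (\matrix_(i, j) B (f i) j).
Proof.
rewrite /(\det (A *m B)).
transitivity (\sum_(s : 'S_r) \sum_(f : {ffun 'I_r -> 'I_n})
   (-1) ^+ s * ((\prod_i A i (f i)) * \prod_i B (f i) (s i))).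
  apply: eq_bigr => s _; rewrite -big_distrr /=; congr (_ * _).
  under eq_bigr do rewrite mxE.
  rewrite (bigA_distr_bigA (fun i j => A i j * B j (s i))) /=.
  by apply: eq_bigr => f _; rewrite big_split.
rewrite exchange_big /=; apply: eq_bigr => f _.
rewrite /(\det _) big_distrr /=; apply: eq_bigr => s _.
rewrite mulrCA; congr (_ * (_ * _)); apply: eq_bigr => i _; by rewrite mxE.
Qed.

Lemma shift_ordK n a (t : 'I_n) (h : (a <= t)%N) :
  exists q : 'I_(n - a), shift_ord a q = t.
Proof.
have lt : (t - a < n - a)%N by rewrite ltn_sub2r // (leq_ltn_trans h).
exists (Ordinal lt); apply: val_inj => /=; by rewrite subnKC.
Qed.

Lemma shift_ord_inj n a : injective (@shift_ord n a).
Proof. move=> x y /(congr1 val) /= /addnI H; exact: val_inj. Qed.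

Lemma mem_shift_img n a (t : 'I_n) :
  (t \in [set shift_ord a q | q in [set: 'I_(n - a)]]) = (a <= t)%N.
Proof.
apply/imsetP/idP => [[q _ ->] /=|h]; first exact: leq_addr.
by have [q Hq] := shift_ordK h; exists q.
Qed.

Lemma sum_inj_ge n a (k : 'I_n -> int)
  (Hk : forall i j : 'I_n, (i <= j)%N -> k j <= k i)
  (f : 'I_(n - a) -> 'I_n) (injf : injective f) :
  \sum_q k (shift_ord a q) <= \sum_q k (f q).
Proof.
case: (ltnP a n) => [an|na]; last first.
  have h0 : (n - a = 0)%N by apply/eqP; rewrite subn_eq0.
  by rewrite !big1 // => q _; have := ltn_ord q; rewrite {2}h0.
pose tau := k (Ordinal an).
suff : \sum_q (k (shift_ord a q) - tau) <= \sum_q (k (f q) - tau).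
  by rewrite !sumrB lerD2r.
set J := [set f q | q in [set: 'I_(n - a)]].
set L := [set shift_ord a q | q in [set: 'I_(n - a)]].
have -> : \sum_q (k (f q) - tau) = \sum_(t in J) (k t - tau).
  rewrite big_imset /=; last by move=> x y _ _; apply: injf.
  by apply: eq_bigl => q; rewrite in_setT.
have -> : \sum_q (k (shift_ord a q) - tau) = \sum_(t in L) (k t - tau).
  rewrite big_imset /=; last by move=> x y _ _; apply: shift_ord_inj.
  by apply: eq_bigl => q; rewrite in_setT.
rewrite [X in X <= _](bigID (fun t => t \in J) (fun t => t \in L)) /=.
rewrite [X in _ <= X](bigID (fun t => t \in L) (fun t => t \in J)) /=.
have -> : \sum_(i in J | i \in L) (k i - tau) = \sum_(i in L | i \in J) (k i - tau).
  by apply: eq_bigl => t; rewrite andbC.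
apply: lerD; first by [].
apply: (@le_trans _ _ 0).
  apply: sumr_le0 => t /andP[tL _]; rewrite subr_le0; apply: Hk.
  by rewrite mem_shift_img in tL.
apply: sumr_ge0 => t /andP[_ tL]; rewrite subr_ge0; apply: Hk.
rewrite mem_shift_img -ltnNge in tL.
exact: ltnW.
Qed.

Definition rows_sub (F : fieldType) n a (g : 'M[F]_n) : 'M[F]_(n - a, n) :=
  \matrix_(p, t) g (shift_ord a p) t.
Definition Xm (F : fieldType) n a (g : 'M[F]_n) : 'M[F]_(n - a, n) :=
  invmx (lr_sub a g) *m rows_sub a g.

Lemma sum_delta (K : nmodType) n (x : 'I_n -> K) t :
  \sum_s x s *+ (s == t) = x t.
Proof. by rewrite (bigD1 t) //= eqxx mulr1n big1 ?addr0 // => s /negPf ->. Qed.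

Lemma prod_expz (F : fieldType) (I : finType) (P : pred I) (x : F) (e : I -> int) :
  x != 0 -> \prod_(i | P i) x ^ (e i) = x ^ (\sum_(i | P i) e i).
Proof.
move=> x0; apply: (big_ind2 (fun a b => a = x ^ b)) => //.
by move=> a1 b1 a2 b2 -> ->; rewrite expfzDr.
Qed.

Lemma GL_det_unit (F : fieldType) (R : {pred F}) pi n (U : 'M[F]_n) :
  is_DVR R pi -> GL_over R U ->
  [/\ \det U != 0, \det U \in R & (\det U)^-1 \in R].
Proof.
move=> HR [Uu Ui Uv]; split.
- by rewrite -unitfE -unitmxE.
- exact: Rdet HR Ui.
- by rewrite -det_inv; exact: Rdet HR Uv.
Qed.

Lemma Fact_X (F : fieldType) (R : {pred F}) pi (HR : is_DVR R pi) n a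
  (g : 'M[F]_n) (k : 'I_n -> int)
  (Hk : forall i j : 'I_n, (i <= j)%N -> k j <= k i)
  (Hg : has_type R pi g k)
  (HD : has_type R pi (lr_sub a g) (fun i => k (shift_ord a i))) :
  lr_sub a g \in unitmx /\ forall p t, Xm a g p t \in R.
Proof.
have pi0 := pi_neq0 HR.
set D := lr_sub a g.
set sigma := \sum_q k (shift_ord a q).
case: HD => U' [V'] [HU' HV' HDe].
have [dU0 dUR dUi] := GL_det_unit HR HU'.
have [dV0 dVR dVi] := GL_det_unit HR HV'.
have detD : \det D = \det U' * pi ^ sigma * \det V'.
  by rewrite /D HDe !det_mulmx det_diag; under eq_bigr do rewrite mxE; rewrite prod_expz.
have detD0 : \det D != 0.
  by rewrite detD !mulf_neq0 // expfz_neq0.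
have Du : D \in unitmx by rewrite unitmxE unitfE.
split => // p t.
case: Hg => U [V] [[_ HUi _] [_ HVi _] Hge].
pose E := rows_sub a g.
pose Dp := \matrix_(i, j) (if j == p then E i t else D i j).
have H1 : Xm a g p t = (\det D)^-1 * \det Dp.
  rewrite /Xm mxE /invmx -/D Du [\det Dp](expand_det_col _ p) big_distrr /=.
  apply: eq_bigr => q _; rewrite !mxE eqxx -mulrA [_ * g _ _]mulrC; congr (_ * (_ * _)).
  rewrite /cofactor; congr (_ * _); congr (\det _).
  by apply/matrixP => i j; rewrite !mxE eq_sym (negPf (neq_lift _ _)).
pose Ub := rows_sub a U.
pose d := \row_i (pi ^ (k i)).
pose Q := \matrix_(s, j) ((if j == p then s == t else s == shift_ord a j)%:R : F).
have HDp : Dp = (Ub *m diag_mx d) *m (V *m Q).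
  apply/matrixP => i j; rewrite mulmxA !mxE.
  have -> : \sum_s (Ub *m diag_mx d *m V) i s * Q s j =
     \sum_s g (shift_ord a i) s * Q s j.
    apply: eq_bigr => s _; rewrite Hge !mxE; congr (_ * _).
    by apply: eq_bigr => l _; rewrite !mul_mx_diag !mxE.
  rewrite /Q; under eq_bigr do rewrite mxE mulr_natr.
  by case: ifP => _; rewrite sum_delta.
have HWR : forall i j, (V *m Q) i j \in R.
  apply: (Rmx_mul HR) => // i j; rewrite mxE; case: ifP => _; case: eqP => _;
  by rewrite ?(R0 HR) ?(R1 HR).
suff HDpR : \det Dp * pi ^ (- sigma) \in R.
  rewrite H1 detD !invfM invr_expz -!mulrA; apply: (Rmul HR) => //.
  rewrite mulrC -!mulrA; apply: (Rmul HR) => //; rewrite mulrC; exact: HDpR.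
rewrite HDp det_mul_rect mulr_suml; apply: (Rsum _ HR) => f _.
case: (boolP (injectiveb f)) => [/injectiveP injf | /injectivePn [i1 [i2 ni12 fi12]]]; last first.
  rewrite (determinant_alternate ni12) ?mulr0 ?mul0r ?(R0 HR) // => j.
  by rewrite !mxE fi12.
rewrite mulrAC; apply: (Rmul HR); last by apply: (Rdet HR) => i j; rewrite mxE.
have -> : \prod_i (Ub *m diag_mx d) i (f i) =
   (\prod_i U (shift_ord a i) (f i)) * pi ^ (\sum_i k (f i)).
  rewrite -prod_expz // -big_split /=; apply: eq_bigr => i _.
  by rewrite mul_mx_diag !mxE.
rewrite -mulrA -expfzDr //; apply: (Rmul HR).
  by apply: (Rprod _ HR) => i _.
apply: (Rpiz HR); rewrite subr_ge0; exact: sum_inj_ge.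
Qed.
Local Close Scope ring_scope.

Lemma Npart_mono ns l l' : l <= l' -> Npart ns l <= Npart ns l'.
Proof.
move=> h; rewrite /Npart -(subnKC h) takeD sumn_cat; exact: leq_addr.
Qed.
Lemma Npart_over ns l : size ns <= l -> Npart ns l = sumn ns.
Proof. move=> h; rewrite /Npart take_oversize //. Qed.
Lemma Npart0 ns : Npart ns 0 = 0. Proof. by case: ns. Qed.

Definition blk (ns : seq nat) (i : nat) : nat :=
  find (fun l => i < Npart ns l.+1) (iota 0 (size ns)).

Lemma blk_lt ns i : i < sumn ns -> blk ns i < size ns.
Proof.
move=> hi; rewrite /blk -[X in _ < X](size_iota 0) -has_find.
have hs : 0 < size ns by case: ns hi.
apply/hasP; exists (size ns).-1.
  by rewrite mem_iota /= add0n prednK ?ltnSn.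
by rewrite prednK // Npart_over.
Qed.

Lemma blk_hi ns i : i < sumn ns -> i < Npart ns (blk ns i).+1.
Proof.
move=> hi; have := blk_lt hi; rewrite /blk => h.
have hh : has (fun l => i < Npart ns l.+1) (iota 0 (size ns)).
  by rewrite has_find size_iota.
by have := nth_find 0 hh; rewrite nth_iota // -{2}(size_iota 0 (size ns)) -has_find.
Qed.

Lemma blk_lo ns i : i < sumn ns -> Npart ns (blk ns i) <= i.
Proof.
move=> hi; have hb := blk_lt hi; move: hb.
case E: (blk ns i) => [|b]; first by rewrite Npart0.
move=> hb; have : b < blk ns i by rewrite E.
move/(before_find 0); rewrite nth_iota ?add0n; last by apply: ltn_trans hb.
by move/negbT; rewrite -leqNgt.
Qed.

Lemma blk_gt ns i l : i < sumn ns -> i < Npart ns l -> blk ns i < l.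
Proof.
move=> hi hl; rewrite ltnNge; apply/negP => h.
have := leq_trans (Npart_mono ns h) (blk_lo hi); rewrite leqNgt hl //.
Qed.

Lemma blk_le ns i l : i < sumn ns -> Npart ns l <= i -> l <= blk ns i.
Proof.
move=> hi hl; rewrite leqNgt; apply/negP => h.
have := leq_trans (blk_hi hi) (Npart_mono ns h); rewrite ltnNge hl //.
Qed.

Lemma sepE ns i j : i < sumn ns -> j < sumn ns ->
  sep_blocks ns i j = (blk ns i != blk ns j).
Proof.
move=> hi hj; apply/hasP/idP => [[l _ /orP[]/andP[h1 h2]] | h].
- have := blk_gt hi h1; have := blk_le hj h2.
  by move=> a b; rewrite neq_ltn (leq_trans b a).
- have := blk_gt hj h1; have := blk_le hi h2.
  by move=> a b; rewrite neq_ltn (leq_trans b a) orbT.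
- case: (ltngtP (blk ns i) (blk ns j)) h => // hij _.
    exists (blk ns i).+1; first by rewrite mem_iota /= add0n ltnS (leq_trans hij) // ltnW // blk_lt.
    by rewrite blk_hi //= (leq_trans (Npart_mono _ hij)) // blk_lo.
  exists (blk ns j).+1; first by rewrite mem_iota /= add0n ltnS (leq_trans hij) // ltnW // blk_lt.
    rewrite blk_hi //=.
    by apply/orP; right; exact: (leq_trans (Npart_mono _ hij) (blk_lo hi)).
Qed.
Local Open Scope ring_scope.

Definition mget (F : fieldType) m n (M : 'M[F]_(m, n)) (p : nat) (t : 'I_n) : F :=
  if insub p is Some p' then M p' t else 0.

Lemma mgetE (F : fieldType) m n (M : 'M[F]_(m, n)) (p : 'I_m) t : mget M p t = M p t.
Proof. by rewrite /mget valK. Qed.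

Lemma mget_ge (F : fieldType) n a n' (M : 'M[F]_(n - a, n')) (i : 'I_n) t :
  (a <= i)%N -> exists q : 'I_(n - a), shift_ord a q = i /\ mget M (i - a) t = M q t.
Proof.
move=> h; have [q hq] := shift_ordK h; exists q; split => //.
by rewrite -hq /= addKn mgetE.
Qed.

Lemma mget_shift (F : fieldType) n a n' (M : 'M[F]_(n - a, n')) (q : 'I_(n - a)) t :
  mget M (shift_ord a q - a) t = M q t.
Proof. by rewrite /= addKn mgetE. Qed.

Lemma sum_shift (K : nmodType) n a (phi : 'I_n -> K) :
  \sum_(t < n) (if (a <= t)%N then phi t else 0) = \sum_(q < n - a) phi (shift_ord a q).
Proof.
rewrite -big_mkcond /=.
rewrite (eq_bigl (fun t => t \in [set shift_ord a q | q in [set: 'I_(n - a)]])); last first.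
  by move=> t; rewrite mem_shift_img.
rewrite big_imset /=; last by move=> x y _ _; apply: shift_ord_inj.
by apply: eq_bigl => q; rewrite in_setT.
Qed.

Lemma X_shift (F : fieldType) n a (g : 'M[F]_n) (Du : lr_sub a g \in unitmx) p q :
  Xm a g p (shift_ord a q) = (p == q)%:R.
Proof.
have := mulVmx Du; move/matrixP/(_ p q); rewrite !mxE => <-.
by apply: eq_bigr => l _; rewrite !mxE.
Qed.

Lemma DX (F : fieldType) n a (g : 'M[F]_n) (Du : lr_sub a g \in unitmx) :
  lr_sub a g *m Xm a g = rows_sub a g.
Proof. by rewrite /Xm mulmxA mulmxV // mul1mx. Qed.

Lemma has_type_cast (F : fieldType) (R : {pred F}) pi m n (e : m = n)
  (A : 'M[F]_m) (B : 'M[F]_n) k k' :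
  (forall i j, A i j = B (cast_ord e i) (cast_ord e j)) ->
  (forall i, k i = k' (cast_ord e i)) ->
  has_type R pi A k -> has_type R pi B k'.
Proof.
case: n / e B k' => B k' hA hk [U [V [HU HV HA]]].
exists U, V; split => //.
apply/matrixP => i j; rewrite -[i](cast_ord_id) -[j](cast_ord_id) -hA HA.
rewrite !cast_ord_id; congr ((_ *m _ *m _) i j).
apply/matrixP => x y; rewrite !mxE hk !cast_ord_id //.

Qed.

Theorem lemma4p20 (F : fieldType) (R : {pred F}) (pi : F)
  (HR : is_DVR R pi) (ns : seq nat) (g : 'M[F]_(sumn ns))
  (k : 'I_(sumn ns) -> int)
  (Hk : forall i j : 'I_(sumn ns), (i <= j)%N -> k j <= k i)
  (HgU : g \in unitmx) (HgP : block_lower ns g)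
  (Htype : forall l : nat, (l < size ns)%N ->
     has_type R pi (lr_sub (Npart ns l) g)
       (fun i => k (shift_ord (Npart ns l) i))) :
  block_lower ns (invmx (levi_part ns g) *m g) /\
  GL_over R (invmx (levi_part ns g) *m g).
Proof.
pose n := sumn ns.
pose N := Npart ns.
have Hfact : forall b, (b < size ns)%N -> lr_sub (N b) g \in unitmx /\
    forall p t, Xm (N b) g p t \in R.
  move=> b hb; have spos : (0 < size ns)%N by apply: leq_ltn_trans hb.
  have Hg : has_type R pi g k.
    have e : (sumn ns - Npart ns 0 = sumn ns)%N by rewrite Npart0 subn0.
    apply: (@has_type_cast F R pi _ _ e _ g _ k _ _ (Htype 0%N spos)).
      by move=> i j; rewrite !mxE; congr (g _ _); apply: val_inj => /=; rewrite {1}Npart0.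
    by move=> i; congr (k _); apply: val_inj => /=; rewrite {1}Npart0.
  exact: (Fact_X HR Hk Hg (Htype b hb)).
have BL : forall l (i j : 'I_n), (l <= size ns)%N -> (i < N l)%N -> (N l <= j)%N -> g i j = 0.
  by move=> l i j hl h1 h2; apply: HgP hl _; rewrite h1 h2.
have gLE : forall i t : 'I_n, levi_part ns g i t = if blk ns i == blk ns t then g i t else 0.
  by move=> i t; rewrite mxE sepE //; case: eqP.
pose X b := Xm (N b) g.
pose Z : 'M[F]_n := \matrix_(i, j) mget (X (blk ns i)) (i - N (blk ns i)) j.
pose Z' : 'M[F]_n := \matrix_(i, j) ((i == j)%:R -
   (if (N (blk ns j).+1 <= i)%N then mget (X (blk ns j).+1) (i - N (blk ns j).+1) j else 0)).
have ZR : forall i j, Z i j \in R.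
  move=> i j; rewrite mxE.
  have [q [_ ->]] := mget_ge (X (blk ns i)) j (blk_lo (ltn_ord i)).
  exact: (Hfact _ (blk_lt (ltn_ord i))).2.
have Z'R : forall i j, Z' i j \in R.
  move=> i j; rewrite mxE; apply: (Rsub HR).
    by case: eqP => _; rewrite ?(R0 HR) ?(R1 HR).
  case: ifP => h; last exact: (R0 HR).
  have hc : ((blk ns j).+1 < size ns)%N.
    rewrite ltnNge; apply/negP => hs.
    by move: h; rewrite /N Npart_over // leqNgt ltn_ord.
  have [q [_ ->]] := mget_ge (X (blk ns j).+1) j h.
  exact: (Hfact _ hc).2.
have EQ1 : levi_part ns g *m Z = g.
  apply/matrixP => i j; rewrite mxE.
  set b := blk ns i.
  have hb : (b < size ns)%N := blk_lt (ltn_ord i).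
  have hlo : (N b <= i)%N := blk_lo (ltn_ord i).
  have hhi : (i < N b.+1)%N := blk_hi (ltn_ord i).
  have step : forall t, levi_part ns g i t * Z t j =
      if (N b <= t)%N then g i t * mget (X b) (t - N b) j else 0.
    move=> t; rewrite gLE [Z t j]mxE; case: eqP => [e|ne].
      by rewrite -e (_ : (N b <= t)%N) // /b e; exact: blk_lo.
    rewrite mul0r; case: ifP => // ht.
    have hbt : (b < blk ns t)%N.
      by rewrite ltn_neqAle (blk_le (ltn_ord t) ht) andbT; apply/eqP.
    rewrite (BL b.+1 i t hb hhi) ?mul0r //.
    exact: leq_trans (Npart_mono _ hbt) (blk_lo (ltn_ord t)).
  rewrite (eq_bigr _ (fun t _ => step t)) sum_shift.
  under eq_bigr do rewrite mget_shift.
  have [p hp] := shift_ordK hlo.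
  have := DX (Hfact b hb).1; move/matrixP/(_ p j).
  rewrite !mxE.
  rewrite hp => <-; apply: eq_bigr => q _; by rewrite !mxE hp.
have EQ2 : g *m Z' = levi_part ns g.
  apply/matrixP => i j; rewrite gLE mxE.
  set c := blk ns j.
  have hc : (c < size ns)%N := blk_lt (ltn_ord j).
  have step : forall t, g i t * Z' t j = g i t *+ (t == j) -
      (if (N c.+1 <= t)%N then g i t * mget (X c.+1) (t - N c.+1) j else 0).
    by move=> t; rewrite mxE mulrBr mulr_natr; case: ifP; rewrite ?mulr0.
  rewrite (eq_bigr _ (fun t _ => step t)) sumrB sum_delta sum_shift.
  under eq_bigr do rewrite mget_shift.
  case: (leqP (N c.+1) i) => hi.
    have hc1 : (c.+1 < size ns)%N.
      rewrite ltnNge; apply/negP => hs.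
      by move: hi; rewrite /N Npart_over // leqNgt ltn_ord.
    have [p hp] := shift_ordK hi.
    have := DX (Hfact _ hc1).1; move/matrixP/(_ p j); rewrite !mxE.
    rewrite hp => <-.
    have -> : (blk ns i == c) = false.
      apply/negbTE; rewrite neq_ltn; apply/orP; right.
      exact: blk_le (ltn_ord i) hi.
    rewrite [X in _ - X](eq_bigr (fun q => lr_sub (N c.+1) g p q * Xm (N c.+1) g q j)) ?subrr // => q _.
    by rewrite !mxE hp.
  rewrite big1 ?subr0; last first.
    move=> q _; rewrite (BL c.+1 i) ?mul0r //; first exact: leq_addr.
  case: eqP => // ne.
  have hbi : (blk ns i < c)%N.
    by rewrite ltn_neqAle; apply/andP; split; [apply/eqP|rewrite -ltnS; exact: blk_gt].
  apply: (BL (blk ns i).+1) => //; first exact: (leq_trans hbi (ltnW hc)).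
    exact: blk_hi.
  exact: leq_trans (Npart_mono _ hbi) (blk_lo (ltn_ord j)).
have Z'Z : Z' *m Z = 1%:M.
  have h : g *m (Z' *m Z) = g *m 1%:M by rewrite mulmxA EQ2 EQ1 mulmx1.
  by have := congr1 (mulmx (invmx g)) h; rewrite !mulKmx.
have ZZ' : Z *m Z' = 1%:M := mulmx1C Z'Z.
have [Zu Z'u] := mulmx1_unit ZZ'.
have gLu : levi_part ns g \in unitmx by rewrite -EQ2 unitmx_mul HgU Z'u.
have hE : invmx (levi_part ns g) *m g = Z by rewrite -{2}EQ1 mulKmx.
have iZ : invmx Z = Z' by rewrite -[invmx Z]mulmx1 -ZZ' mulmxA mulVmx // mul1mx.
rewrite hE; split; last by split => // i j; rewrite iZ.
move=> l i j hl /andP[h1 h2]; rewrite mxE.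
set b := blk ns i.
have hbl : (b < l)%N := blk_gt (ltn_ord i) h1.
have hb : (b < size ns)%N := leq_trans hbl hl.
have [q [hq ->]] := mget_ge (X b) j (blk_lo (ltn_ord i)).
have hj : (N b <= j)%N.
  exact: leq_trans (Npart_mono _ (ltnW hbl)) h2.
have [q' hq'] := shift_ordK hj.
rewrite -hq' /X X_shift; last exact: (Hfact b hb).1.
case: eqP => // e; exfalso.
have : (i < j)%N.
  apply: (leq_trans (blk_hi (ltn_ord i))); apply: leq_trans h2; exact: Npart_mono.
by rewrite -hq -hq' /= e ltnn.
Qed.
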